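(* For every integer $k \geq 1$, let $\mathcal{b}(k)$ denote the greatest common divisor of all the sums $\sum_{i=1}^{k} b_{n+i}$, $n \geq 0$. Then $$\mathcal{b}(k) = \begin{cases} \gcd\!\left(\tfrac12(B_k - k),\, P_k\right), & \text{if } k \text{ is even};\\ \gcd\!\left(\tfrac12(B_k - k),\, 2Q_k\right), & \text{if } k \text{ is odd}.\end{cases}$$
   Context: The Pell sequence $(P_n)_{n\ge0}$ is defined by $P_0=0$, $P_1=1$, $P_n = 2P_{n-1}+P_{n-2}$. The associated Pell sequence $(Q_n)_{n\ge0}$ is defined by $Q_0=1$, $Q_1=1$, $Q_n=2Q_{n-1}+Q_{n-2}$. The balancing sequence $(B_n)_{n\ge0}$ is defined by $B_0=0$, $B_1=1$, $B_n=6B_{n-1}-B_{n-2}$. The cobalancing sequence $(b_n)_{n\ge0}$ is defined by $b_0=0$, $b_1=0$, $b_n=6b_{n-1}-b_{n-2}+2$. *)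

(* Defs.v *)
From mathcomp Require Import all_boot all_order all_algebra.
Set Implicit Arguments. Unset Strict Implicit. Unset Printing Implicit Defensive.
Import Order.TTheory GRing.Theory Num.Theory.
Local Open Scope ring_scope.

Fixpoint pell (n : nat) : int :=
  match n with
  | 0%N => 0
  | 1%N => 1
  | (m.+1 as n1).+1 => 2 * pell n1 + pell m
  end.

Fixpoint apell (n : nat) : int :=
  match n with
  | 0%N => 1
  | 1%N => 1
  | (m.+1 as n1).+1 => 2 * apell n1 + apell m
  end.

Fixpoint bal (n : nat) : int :=
  match n with
  | 0%N => 0
  | 1%N => 1
  | (m.+1 as n1).+1 => 6 * bal n1 - bal m
  end.

Fixpoint cobal (n : nat) : int :=
  match n with
  | 0%N => 0
  | 1%N => 0
  | (m.+1 as n1).+1 => 6 * cobal n1 - cobal m + 2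
  end.

Definition cobal_window (k n : nat) : int := \sum_(1 <= i < k.+1) cobal (n + i).

Definition is_gcd_of (S : int -> Prop) (d : int) : Prop :=
  0 <= d /\ (forall x, S x -> (d %| x)%Z) /\
  (forall e : int, (forall x, S x -> (e %| x)%Z) -> (e %| d)%Z).

(* Main.v *)
Require Import Defs.
From mathcomp Require Import all_boot all_order all_algebra.
From mathcomp Require Import ring.
Import Order.TTheory GRing.Theory Num.Theory.
Local Open Scope ring_scope.

Lemma dvdz_comb (e a b x y : int) :
  (e %| a)%Z -> (e %| b)%Z -> (e %| x * a + y * b)%Z.
Proof.
move=> /dvdzP [qa ->] /dvdzP [qb ->]; apply/dvdzP.
by exists (x * qa + y * qb); ring.
Qed.

Lemma pellSS n : pell n.+2 = 2 * pell n.+1 + pell n. Proof. by []. Qed.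
Lemma apellSS n : apell n.+2 = 2 * apell n.+1 + apell n. Proof. by []. Qed.
Lemma balSS n : bal n.+2 = 6 * bal n.+1 - bal n. Proof. by []. Qed.
Lemma cobalSS n : cobal n.+2 = 6 * cobal n.+1 - cobal n + 2. Proof. by []. Qed.

Lemma PQ_step n : pell n.+1 = pell n + apell n /\ apell n.+1 = apell n + 2 * pell n.
Proof.
suff H : forall n, (pell n.+1 = pell n + apell n /\ apell n.+1 = apell n + 2 * pell n) /\
  (pell n.+2 = pell n.+1 + apell n.+1 /\ apell n.+2 = apell n.+1 + 2 * pell n.+1).
  by case: (H n).
elim=> [|m [[h1 h2] [h3 h4]]]; first by split; split.
split; first by split.
rewrite !pellSS !apellSS in h3 h4 *.
rewrite h1 h2; split; ring.
Qed.

Lemma bal_PQ n : bal n = pell n * apell n.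
Proof.
suff H : forall n, bal n = pell n * apell n /\ bal n.+1 = pell n.+1 * apell n.+1.
  by case: (H n).
elim=> [|m [h1 h2]]; first by split.
split=> //.
rewrite balSS h1 h2.
have [a1 a2] := PQ_step m.+1. have [b1 b2] := PQ_step m.
rewrite a1 a2 b1 b2; ring.
Qed.

Lemma cassini n : apell n ^+ 2 - 2 * pell n ^+ 2 = (-1) ^+ n.
Proof.
elim: n => [|n IH]; first by [].
have [a1 a2] := PQ_step n.
rewrite a1 a2 [(-1) ^+ n.+1]exprS -IH; ring.
Qed.

Lemma cobal_B n : 2 * cobal n.+1 = bal n.+1 - bal n - 1.
Proof.
suff H : forall n, 2 * cobal n.+1 = bal n.+1 - bal n - 1 /\
   2 * cobal n.+2 = bal n.+2 - bal n.+1 - 1 by case: (H n).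
elim=> [|m [h1 h2]]; first by split.
split=> //.
rewrite cobalSS balSS.
have -> : 2 * (6 * cobal m.+2 - cobal m.+1 + 2) =
  6 * (2 * cobal m.+2) - 2 * cobal m.+1 + 4 by ring.
rewrite h1 h2 balSS; ring.
Qed.

Lemma sum_cobal k : 2 * \sum_(1 <= i < k.+1) cobal i = bal k - k%:Z.
Proof.
elim: k => [|k IH]; first by rewrite big_geq.
rewrite big_nat_recr // mulrDr IH cobal_B.
rewrite -[k.+1]addn1 PoszD; ring.
Qed.

Lemma shift_sum (f : nat -> int) k :
  \sum_(1 <= i < k.+1) f i.+1 = \sum_(1 <= i < k.+1) f i + f k.+1 - f 1%N.
Proof.
elim: k => [|k IH]; first by rewrite !big_geq // add0r subrr.
rewrite big_nat_recr // IH [in RHS]big_nat_recr // /=; ring.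
Qed.

Lemma window_S k n :
  cobal_window k n.+1 = cobal_window k n + cobal (n + k.+1) - cobal n.+1.
Proof.
rewrite /cobal_window.
have -> : \sum_(1 <= i < k.+1) cobal (n.+1 + i) = \sum_(1 <= i < k.+1) cobal (n + i.+1).
  by apply: eq_bigr => i _; rewrite addSn addnS.
by rewrite (shift_sum (fun i => cobal (n + i))) addn1.
Qed.

Lemma window_rec k n :
  cobal_window k n.+2 = 6 * cobal_window k n.+1 - cobal_window k n + 2 * k%:Z.
Proof.
rewrite /cobal_window.
have -> : \sum_(1 <= i < k.+1) cobal (n.+2 + i) =
  \sum_(1 <= i < k.+1) (6 * cobal (n.+1 + i) - cobal (n + i) + 2).
  by apply: eq_bigr => i _; rewrite !addSn.
rewrite big_split sumrB -mulr_sumr sumr_const_nat subn1.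
by rewrite -[k%:Z]natz mulr_natr.
Qed.

Lemma parity n : (exists a, apell n = 2 * a + 1) /\
  (exists c, pell n = 2 * c + (if odd n then 1 else 0)).
Proof.
elim: n => [|n [[a ha] [c hc]]]; first by split; [exists 0 | exists 0].
have [h1 h2] := PQ_step n.
split; first by exists (a + pell n); rewrite h2 ha; ring.
rewrite h1 hc ha /=; case: (odd n) => /=.
  by exists (c + a + 1); ring.
by exists (c + a); ring.
Qed.

Lemma half_eq (x y : int) : 2 * x = 2 * y -> x = y.
Proof. by apply: mulfI. Qed.

Theorem theorem23 (k : nat) (hk : (1 <= k)%N) :
  is_gcd_of (fun x => exists n : nat, x = cobal_window k n)
    (if ~~ odd k then gcdz ((bal k - k%:Z) %/ 2)%Z (pell k)
     else gcdz ((bal k - k%:Z) %/ 2)%Z (2 * apell k)).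
Proof.
set P := pell k. set Q := apell k.
set S := cobal_window k.
set s := S 0%N.
have hs : 2 * s = P * Q - k%:Z.
  rewrite -bal_PQ -sum_cobal /s /S /cobal_window; congr (2 * _).
have -> : ((bal k - k%:Z) %/ 2)%Z = s by rewrite bal_PQ -hs mulKz.
set b := cobal k.+1.
have hS1 : S 1%N = s + b by rewrite /S window_S add0n /=; rewrite subr0.
have hb : 2 * b = (P + Q) * (Q + 2 * P) - P * Q - 1.
  by rewrite /b cobal_B !bal_PQ; have [-> ->] := PQ_step k.
have hcas := cassini k; rewrite -/P -/Q in hcas.
have hrec := window_rec k; rewrite -/S in hrec.
have h2k : forall e, (forall n, (e %| S n)%Z) -> (e %| 2 * k%:Z)%Z.
  move=> e he.
  have -> : 2 * k%:Z = 1 * (1 * S 2%N + (6 * (-1)) * S 1%N) + 1 * S 0%N by rewrite hrec; ring.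
  apply: dvdz_comb; [apply: dvdz_comb; exact: he | exact: he].
have hind : forall d, (d %| s)%Z -> (d %| b)%Z -> (d %| 2 * k%:Z)%Z ->
    forall n, (d %| S n)%Z.
  move=> d ds db dk.
  suff H : forall n, (d %| S n)%Z /\ (d %| S n.+1)%Z by move=> n; case: (H n).
  elim=> [|n [h1 h2]].
    split=> //; rewrite hS1.
    have -> : s + b = 1 * s + 1 * b by ring.
    by apply: dvdz_comb.
  split=> //; rewrite hrec.
  have -> : 6 * S n.+1 - S n + 2 * k%:Z = 1 * (6 * S n.+1 + (-1) * S n) + 1 * (2 * k%:Z) by ring.
  by apply: dvdz_comb => //; apply: dvdz_comb.
have heb : forall e, (forall n, (e %| S n)%Z) -> (e %| b)%Z.
  move=> e he; have -> : b = 1 * S 1%N + (-1) * S 0%N by rewrite hS1 /s; ring.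
  by apply: dvdz_comb.
have hA : forall e, (forall n, (e %| S n)%Z) -> (e %| 2 * (P * Q))%Z.
  move=> e he; have -> : 2 * (P * Q) = 2 * (2 * s) + 1 * (2 * k%:Z) by rewrite hs; ring.
  apply: dvdz_comb; [apply: dvdz_mull; exact: he | exact: h2k].
case: ifP => hodd.
- have hz : Q ^+ 2 - 2 * P ^+ 2 - 1 = 0.
    by rewrite hcas -signr_odd (negbTE hodd) expr0 subrr.
  have hbv : b = P * (Q + 2 * P).
    apply: half_eq; rewrite hb.
    have -> : (P + Q) * (Q + 2 * P) - P * Q - 1 = 2 * (P * (Q + 2 * P)) + (Q ^+ 2 - 2 * P ^+ 2 - 1) by ring.
    by rewrite hz addr0.
  split; first by [].
  split.
    move=> x [n ->]; apply: hind.
    + exact: dvdz_gcdl.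
    + by rewrite hbv; apply: dvdz_mulr; exact: dvdz_gcdr.
    + have -> : 2 * k%:Z = (2 * Q) * P + (-4) * s.
        have -> : 2 * k%:Z = 2 * (P * Q) - 2 * (2 * s) by rewrite hs; ring.
        ring.
      by apply: dvdz_comb; [exact: dvdz_gcdr | exact: dvdz_gcdl].
  move=> e hx.
  have he : forall n, (e %| S n)%Z by move=> n; apply: hx; exists n.
  rewrite dvdz_gcd; apply/andP; split; first exact: he.
  have eB := heb e he; have eA := hA e he.
  have e4 : (e %| 4 * P ^+ 2)%Z.
    have -> : 4 * P ^+ 2 = 2 * b + (-1) * (2 * (P * Q)) by rewrite hbv; ring.
    by apply: dvdz_comb.
  have e2 : (e %| 2 * P)%Z.
    have -> : 2 * P = Q * (2 * (P * Q)) + (- P) * (4 * P ^+ 2).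
      have -> : Q * (2 * (P * Q)) + (- P) * (4 * P ^+ 2) = 2 * P + 2 * P * (Q ^+ 2 - 2 * P ^+ 2 - 1) by ring.
      by rewrite hz mulr0 addr0.
    by apply: dvdz_comb.
  have -> : P = (Q - 2 * P) * b + P ^+ 2 * (2 * P).
    have -> : (Q - 2 * P) * b + P ^+ 2 * (2 * P) = P + P * (Q ^+ 2 - 2 * P ^+ 2 - 1) by rewrite hbv; ring.
    by rewrite hz mulr0 addr0.
  by apply: dvdz_comb.
- have ho : odd k by apply: negbFE.
  have hz : Q ^+ 2 - 2 * P ^+ 2 + 1 = 0.
    by rewrite hcas -signr_odd ho expr1 addNr.
  have hbv : b = (P + Q) * Q.
    apply: half_eq; rewrite hb.
    have -> : (P + Q) * (Q + 2 * P) - P * Q - 1 = 2 * ((P + Q) * Q) - (Q ^+ 2 - 2 * P ^+ 2 + 1) by ring.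
    by rewrite hz subr0.
  split; first by [].
  split.
    move=> x [n ->]; apply: hind.
    + exact: dvdz_gcdl.
    + have [[a ha] [c hc]] := parity k.
      rewrite -/P -/Q ho in ha hc.
      have -> : b = (a + c + 1) * (2 * Q) by rewrite hbv hc ha; ring.
      by apply: dvdz_mull; exact: dvdz_gcdr.
    + have -> : 2 * k%:Z = P * (2 * Q) + (-4) * s.
        have -> : 2 * k%:Z = 2 * (P * Q) - 2 * (2 * s) by rewrite hs; ring.
        ring.
      by apply: dvdz_comb; [exact: dvdz_gcdr | exact: dvdz_gcdl].
  move=> e hx.
  have he : forall n, (e %| S n)%Z by move=> n; apply: hx; exists n.
  rewrite dvdz_gcd; apply/andP; split; first exact: he.
  have eB := heb e he; have eA := hA e he.
  have -> : 2 * Q = (2 * P - 2 * Q) * b + P * (2 * (P * Q)).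
    have -> : (2 * P - 2 * Q) * b + P * (2 * (P * Q)) = 2 * Q - 2 * Q * (Q ^+ 2 - 2 * P ^+ 2 + 1) by rewrite hbv; ring.
    by rewrite hz mulr0 subr0.
  by apply: dvdz_comb.
Qed.
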